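(* Let $A$ be a finite set of relatively prime positive integers. Then $\mathrm{Geo}(A)\le \mathrm{Add}(A)$.
   Context: $\mathbb{N}$ denotes the set of positive integers; $K-K=\{x-y : x,y\in K\}$. A set of integers is relatively prime if it is nonempty and its elements have no common factor greater than $1$. An $\mathcal{N}$-set in $\mathbb{R}$ is a compact set $K\subseteq\mathbb{R}$ such that for every $x\in\mathbb{R}$ there exists $y\in K$ with $x-y\in\mathbb{Z}$. A representation of $1$ by elements of $A$ consists of pairwise distinct $a_1,\ldots,a_h\in A$, positive integers $w_1,\ldots,w_h$ and signs $\varepsilon_1,\ldots,\varepsilon_h\in\{1,-1\}$ with $\sum_{i=1}^h\varepsilon_i w_i a_i=1$; its weight is $\sum_{i=1}^h w_i+\operatorname{card}(A)-h$. The additive weight $\mathrm{Add}(A)$ is the smallest weight of a representation of $1$ by elements of $A$. The weight of an $\mathcal{N}$-set is its number of connected components, and the geometric weight $\mathrm{Geo}(A)$ is the smallest weight of an $\mathcal{N}$-set $K$ with $A=(K-K)\cap\mathbb{N}$. *)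

(* Defs.v *)
From Stdlib Require Import Reals ZArith List Arith.
Open Scope R_scope.

Definition finset_pos (A : list nat) : Prop :=
  NoDup A /\ (forall a, In a A -> (0 < a)%nat).

Definition rel_prime_set (A : list nat) : Prop :=
  A <> nil /\
  (forall d : nat, (forall a, In a A -> Nat.divide d a) -> d = 1%nat).

(* A representation of 1 by elements of A: a list of triples (a_i, w_i, eps_i)
   with pairwise distinct a_i in A, w_i positive, eps_i in {1,-1},
   and sum eps_i * w_i * a_i = 1. *)
Definition is_rep (A : list nat) (r : list (nat * nat * Z)) : Prop :=
  NoDup (map (fun t => fst (fst t)) r) /\
  (forall a w e, In (a, w, e) r -> In a A /\ (0 < w)%nat /\ (e = 1%Z \/ e = (-1)%Z)) /\
  fold_right (fun t s => (snd t * Z.of_nat (snd (fst t)) * Z.of_nat (fst (fst t)) + s)%Z)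
    0%Z r = 1%Z.

Definition rep_weight (A : list nat) (r : list (nat * nat * Z)) : nat :=
  (fold_right (fun t s => snd (fst t) + s) 0 r + length A - length r)%nat.

Definition N_set (K : R -> Prop) : Prop :=
  compact K /\ (forall x : R, exists y, K y /\ exists k : Z, x - y = IZR k).

(* A = (K - K) ∩ N  (with A a set of positive integers) *)
Definition diff_pos_set (K : R -> Prop) (A : list nat) : Prop :=
  forall n : nat, (0 < n)%nat ->
    (In n A <-> exists x y, K x /\ K y /\ x - y = INR n).

Definition connected_R (S : R -> Prop) : Prop :=
  ~ (exists U V : R -> Prop,
       open_set U /\ open_set V /\
       (forall x, S x -> U x \/ V x) /\
       (exists x, S x /\ U x) /\ (exists x, S x /\ V x) /\
       (forall x, S x -> U x -> V x -> False)).

Definition component (K : R -> Prop) (p : R) (x : R) : Prop :=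
  exists S : R -> Prop, connected_R S /\ (forall z, S z -> K z) /\ S p /\ S x.

Definition ncomp_le (K : R -> Prop) (n : nat) : Prop :=
  exists p : nat -> R,
    (forall i, (i < n)%nat -> K (p i)) /\
    (forall x, K x -> exists i, (i < n)%nat /\ component K (p i) x).

(* Main.v *)
Require Import Defs.
From Stdlib Require Import Reals ZArith List Arith Lra Lia Classical Wf_nat.
Open Scope R_scope.

Lemma closed_ext (P Q : R -> Prop) :
  (forall x, P x <-> Q x) -> closed_set P -> closed_set Q.
Proof.
  intros H C. unfold closed_set in *. apply open_set_P6 with (complementary P); [exact C|].
  unfold eq_Dom, included, complementary; split; intros x Hx HQ; apply Hx, H; auto.
Qed.

Lemma closed_union (P Q : R -> Prop) :
  closed_set P -> closed_set Q -> closed_set (fun x => P x \/ Q x).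
Proof.
  intros HP HQ. unfold closed_set in *.
  apply open_set_P6 with (intersection_domain (complementary P) (complementary Q)).
  - apply open_set_P3; auto.
  - unfold eq_Dom, included, complementary, intersection_domain; split.
    + intros x [H1 H2] [H|H]; auto.
    + intros x H; split; intro; apply H; auto.
Qed.

Lemma closed_interval a b : closed_set (fun x => a <= x <= b).
Proof. apply compact_P2, compact_P3. Qed.

Lemma closed_empty : closed_set (fun _ => False).
Proof.
  unfold closed_set. apply open_set_P6 with (fun _ => True). apply open_set_P5.
  unfold eq_Dom, included, complementary; split; auto.
Qed.

Lemma closed_bigunion (C : nat -> R -> Prop) n :
  (forall j, closed_set (C j)) -> closed_set (fun x => exists j, (j < n)%nat /\ C j x).
Proof.
  intros HC. induction n.
  - apply closed_ext with (fun _ => False). split; [tauto|]. intros [j [Hj _]]; lia.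
    apply closed_empty.
  - apply closed_ext with (fun x => (exists j, (j < n)%nat /\ C j x) \/ C n x).
    + intros x; split.
      * intros [[j [Hj Hc]]|Hc]; [exists j; split; [lia|auto]| exists n; split; [lia|auto]].
      * intros [j [Hj Hc]]. destruct (Nat.eq_dec j n); [subst; right; auto|left; exists j; split; [lia|auto]].
    + apply closed_union; auto.
Qed.

Definition bnd (P : R -> Prop) := exists B, forall x, P x -> -B <= x <= B.

Lemma bnd_union P Q : bnd P -> bnd Q -> bnd (fun x => P x \/ Q x).
Proof.
  intros [B1 H1] [B2 H2]. exists (Rmax B1 B2). intros x [H|H].
  - specialize (H1 x H). pose proof (Rmax_l B1 B2). lra.
  - specialize (H2 x H). pose proof (Rmax_r B1 B2). lra.
Qed.

Lemma bnd_ext (P Q : R -> Prop) : (forall x, Q x -> P x) -> bnd P -> bnd Q.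
Proof. intros H [B HB]; exists B; auto. Qed.

Lemma bnd_bigunion (C : nat -> R -> Prop) n :
  (forall j, bnd (C j)) -> bnd (fun x => exists j, (j < n)%nat /\ C j x).
Proof.
  intros HC. induction n.
  - exists 0. intros x [j [Hj _]]; lia.
  - apply bnd_ext with (fun x => (exists j, (j < n)%nat /\ C j x) \/ C n x).
    + intros x [j [Hj Hc]]. destruct (Nat.eq_dec j n); [subst; right; auto|left; exists j; split; [lia|auto]].
    + apply bnd_union; auto.
Qed.

Lemma bnd_interval a b : bnd (fun x => a <= x <= b).
Proof. exists (Rabs a + Rabs b). intros x Hx.
  pose proof (Rabs_pos a); pose proof (Rabs_pos b).
  pose proof (Rle_abs a); pose proof (Rle_abs (-a)); rewrite Rabs_Ropp in *.
  pose proof (Rle_abs b); pose proof (Rle_abs (-b)); rewrite Rabs_Ropp in *. lra.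
Qed.

Lemma cb_compact P : closed_set P -> bnd P -> compact P.
Proof.
  intros C [B HB]. apply compact_P5; auto. exists (-B), B. auto.
Qed.

Lemma lub_approx (E : R -> Prop) c (d : R) :
  is_lub E c -> 0 < d -> exists x, E x /\ c - d < x.
Proof.
  intros [Hub Hlub] Hd. destruct (classic (exists x, E x /\ c - d < x)) as [H|H]; auto.
  exfalso. assert (is_upper_bound E (c - d)).
  { intros x Ex. destruct (Rle_dec x (c - d)); auto. exfalso; apply H; exists x; split; auto; lra. }
  specialize (Hlub _ H0). lra.
Qed.

Lemma conn_aux a b (U V : R -> Prop) u v :
  open_set U -> open_set V -> (forall x, a<=x<=b -> U x \/ V x) ->
  a<=u<=b -> U u -> a<=v<=b -> V v ->
  (forall x, a<=x<=b -> U x -> V x -> False) -> u < v -> False.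
Proof.
  intros HU HV Hcov Su Uu Sv Vv Hdis Huv.
  set (E := fun x => u <= x <= v /\ forall z, u <= z <= x -> U z).
  assert (bE : bound E). { exists v. intros x [Hx _]; lra. }
  assert (eE : exists x, E x). { exists u. split; [lra|]. intros z Hz. replace z with u by lra; auto. }
  destruct (completeness E bE eE) as [c Hc].
  destruct Hc as [Hub Hlub].
  assert (Hc1 : u <= c). { apply Hub. destruct eE as [x Ex]. split; [lra|]. intros z Hz. replace z with u by lra; auto. }
  assert (Hc2 : c <= v). { apply Hlub. intros x [Hx _]; lra. }
  assert (Hc : is_lub E c) by (split; auto).
  assert (Sc : a <= c <= b) by lra.
  destruct (Hcov c Sc) as [Uc|Vc].
  - destruct (HU c Uc) as [d Hd].
    destruct (Req_dec c v) as [Ecv|Ncv].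
    { subst c. apply (Hdis v); auto. }
    destruct (lub_approx E c d Hc (cond_pos d)) as [x [[Hx1 Hx2] Hx3]].
    set (c' := Rmin (c + d/2) v).
    assert (Hc'1 : c' <= v) by apply Rmin_r.
    assert (Hc'2 : c < c'). { unfold c'. unfold Rmin; destruct Rle_dec; pose proof (cond_pos d); lra. }
    assert (Hc'3 : c' <= c + d/2) by apply Rmin_l.
    assert (E c').
    { split; [lra|]. intros z Hz. destruct (Rle_dec z x). apply Hx2; lra.
      assert (x <= c) by (apply Hub; split; auto).
      apply Hd. unfold disc. apply Rabs_def1; pose proof (cond_pos d); lra. }
    pose proof (Hub c' H). lra.
    all: pose proof (cond_pos d); lra.
  - destruct (HV c Vc) as [d Hd].
    destruct (lub_approx E c d Hc (cond_pos d)) as [x [[Hx1 Hx2] Hx3]].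
    assert (x <= c) by (apply Hub; split; auto).
    apply (Hdis x). lra. apply Hx2; lra.
    apply Hd. unfold disc. apply Rabs_def1; pose proof (cond_pos d); lra.
Qed.

Lemma connected_interval a b : connected_R (fun x => a <= x <= b).
Proof.
  intros [U [V [HU [HV [Hcov [[u [Su Uu]] [[v [Sv Vv]] Hdis]]]]]]].
  destruct (Rtotal_order u v) as [lt|[eq|gt]].
  - apply (conn_aux a b U V u v); auto.
  - subst. eapply Hdis; eauto.
  - apply (conn_aux a b V U v u); auto.
    intros x Hx; destruct (Hcov x Hx); auto.
    intros x Hx H1 H2; eapply Hdis; eauto.
Qed.

Lemma core M t1 t2 k : 0 < M -> 0 <= t1 <= M -> 0 <= t2 <= M -> t1 - t2 = M * IZR k ->
  (k = 0%Z /\ t1 = t2) \/ (k = 1%Z /\ t1 = M /\ t2 = 0) \/ (k = (-1)%Z /\ t1 = 0 /\ t2 = M).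
Proof.
  intros HM H1 H2 H.
  assert (IZR k <= 1). { destruct (Rle_dec (IZR k) 1); auto. nra. }
  assert (-1 <= IZR k). { destruct (Rle_dec (-1) (IZR k)); auto. nra. }
  apply le_IZR in H0. apply le_IZR in H3.
  assert (k = (-1)%Z \/ k = 0%Z \/ k = 1%Z) by lia.
  destruct H4 as [ -> | [ -> | -> ] ]; simpl in H; [right; right|left|right; left]; (split; [reflexivity|]); try split; lra.
Qed.

Lemma diff_eq M z1 z2 t1 t2 n : 0 < M ->
  (IZR z1 + t1 / M) - (IZR z2 + t2 / M) = IZR n -> t1 - t2 = M * IZR (n - z1 + z2).
Proof.
  intros HM H. rewrite plus_IZR, minus_IZR, <- H. field. lra.
Qed.

Definition sP (ds : list Z) (j : nat) : Z := fold_right Z.add 0%Z (firstn j ds).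
Definition Tp (i : nat) : R := / (INR i + 2).

Lemma sP_S ds j : sP ds (S j) = (sP ds j + nth j ds 0)%Z.
Proof.
  unfold sP. revert j; induction ds as [|a l IH]; intros j.
  - destruct j; simpl; lia.
  - destruct j; simpl. lia. specialize (IH j). simpl in IH. rewrite IH. lia.
Qed.

Lemma sP_last ds m : length ds = S m -> (sP ds m + nth m ds 0)%Z = fold_right Z.add 0%Z ds.
Proof.
  intros H. rewrite <- sP_S, <- H. unfold sP. rewrite firstn_all. auto.
Qed.

Lemma Tp_bounds i : 0 < Tp i < 1.
Proof.
  unfold Tp. pose proof (pos_INR i). split.
  - apply Rinv_0_lt_compat; lra.
  - rewrite <- Rinv_1. apply Rinv_1_lt_contravar; lra.
Qed.

Lemma Tp_inj i k : Tp i = Tp k -> i = k.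
Proof.
  unfold Tp. intros H. apply (f_equal Rinv) in H. rewrite !Rinv_inv in H.
  apply INR_eq. lra.
Qed.

Lemma find_j m t : 0 <= t <= INR (S m) -> exists j, (j <= m)%nat /\ INR j <= t <= INR j + 1.
Proof.
  induction m; intros H.
  - exists 0%nat. split; [lia|]. replace (INR 1) with 1 in H by reflexivity. replace (INR 0) with 0 by reflexivity. lra.
  - destruct (Rle_dec t (INR (S m))).
    + destruct IHm as [j [Hj Ht]]; [lra|]. exists j. split; [lia|auto].
    + exists (S m). split; [lia|]. rewrite S_INR with (n := S m) in H. lra.
Qed.

Lemma piece_iff s j M y : 0 < M ->
  ((exists t, INR j <= t <= INR j + 1 /\ y = s + t / M) <-> s + INR j / M <= y <= s + (INR j + 1) / M).
Proof.
  intros HM. assert (0 <= / M) by (apply Rlt_le, Rinv_0_lt_compat; auto). split.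
  - intros [t [Ht ->]]. unfold Rdiv. split; apply Rplus_le_compat_l, Rmult_le_compat_r; lra.
  - intros Hy. exists ((y - s) * M). split; [|field; lra].
    assert (INR j / M * M = INR j) by (field; lra).
    assert ((INR j + 1) / M * M = INR j + 1) by (field; lra).
    split; [rewrite <- H0 | rewrite <- H1]; apply Rmult_le_compat_r; lra.
Qed.

Definition KS (m : nat) (ds : list Z) (E : list nat) (y : R) : Prop :=
  (exists j t, (j < m)%nat /\ INR j <= t <= INR j + 1 /\ y = IZR (sP ds j) + t / INR m) \/
  (exists i, (i < length E)%nat /\ y = IZR (Z.of_nat (nth i E 0%nat)) + Tp i / INR m).

Lemma INR_le_S a b : INR a <= INR b + 1 -> (a <= S b)%nat.
Proof. intros H. apply INR_le. rewrite S_INR. auto. Qed.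

Lemma KS_Nset m ds E : (1 <= m)%nat -> N_set (KS m ds E).
Proof.
  intros Hm. assert (HM : 0 < INR m) by (apply lt_0_INR; lia). split.
  - apply cb_compact.
    + apply closed_ext with (fun y => (exists j, (j < m)%nat /\
          (fun j y => IZR (sP ds j) + INR j / INR m <= y <= IZR (sP ds j) + (INR j + 1) / INR m) j y)
        \/ (exists i, (i < length E)%nat /\ (fun i y =>
           IZR (Z.of_nat (nth i E 0%nat)) + Tp i / INR m <= y <= IZR (Z.of_nat (nth i E 0%nat)) + Tp i / INR m) i y)).
      * intros y. unfold KS. split.
        -- intros [[j [Hj Hy]]|[i [Hi Hy]]].
           ++ left. apply piece_iff in Hy; auto. destruct Hy as [t Ht]. exists j, t. tauto.
           ++ right. exists i. split; auto. lra.
        -- intros [[j [t [Hj Hy]]]|[i [Hi Hy]]].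
           ++ left. exists j. split; auto. apply piece_iff; eauto.
           ++ right. exists i. split; auto. lra.
      * apply closed_union; apply closed_bigunion; intros; apply closed_interval.
    + apply bnd_ext with (fun y => (exists j, (j < m)%nat /\
          (fun j y => IZR (sP ds j) + INR j / INR m <= y <= IZR (sP ds j) + (INR j + 1) / INR m) j y)
        \/ (exists i, (i < length E)%nat /\ (fun i y =>
           IZR (Z.of_nat (nth i E 0%nat)) + Tp i / INR m <= y <= IZR (Z.of_nat (nth i E 0%nat)) + Tp i / INR m) i y)).
      * intros y [[j [t [Hj Hy]]]|[i [Hi Hy]]].
        -- left. exists j. split; auto. apply piece_iff; eauto.
        -- right. exists i. split; auto. lra.
      * apply bnd_union; apply bnd_bigunion; intros; apply bnd_interval.
  - intros x. destruct (archimed x) as [A1 A2].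
    set (q := (up x - 1)%Z). set (u := x - IZR q).
    assert (Hu : 0 <= u <= 1). { unfold u, q. rewrite minus_IZR. simpl. lra. }
    set (t := u * INR m).
    destruct m as [|m']; [lia|].
    destruct (find_j m' t) as [j [Hj Ht]]. { unfold t. split; nra. }
    exists (IZR (sP ds j) + t / INR (S m')). split.
    + left. exists j, t. split; [lia|]. split; auto.
    + exists (q - sP ds j)%Z. rewrite minus_IZR. unfold t, u. field. lra.
Qed.

Lemma INR_lt1 j t : INR j <= t -> t < 1 -> j = 0%nat.
Proof. intros H1 H2. assert (INR j < INR 1) by (simpl; lra). apply INR_lt in H. lia. Qed.

Lemma INR_le0 j : INR j <= 0 -> j = 0%nat.
Proof. intros H. assert (INR j <= INR 0) by (simpl; lra). apply INR_le in H0. lia. Qed.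

Lemma KS_range m ds E y : (1 <= m)%nat -> KS m ds E y ->
  exists z t, 0 <= t <= INR m /\ y = IZR z + t / INR m.
Proof.
  intros Hm [[j [t [Hj [Ht Hy]]]]|[i [Hi Hy]]].
  - exists (sP ds j), t. split; auto. pose proof (pos_INR j).
    assert (INR (S j) <= INR m) by (apply le_INR; lia). rewrite S_INR in H0. lra.
  - exists (Z.of_nat (nth i E 0%nat)), (Tp i). split; auto.
    pose proof (Tp_bounds i). assert (INR 1 <= INR m) by (apply le_INR; lia). simpl in H0. lra.
Qed.

Lemma KS_diff_fwd m ds E n : (1 <= m)%nat -> length ds = m -> fold_right Z.add 0%Z ds = (-1)%Z ->
  (0 < n)%nat ->
  (exists x y, KS m ds E x /\ KS m ds E y /\ x - y = INR n) ->
  (exists j, (j < m)%nat /\ Z.abs (nth j ds 0%Z) = Z.of_nat n) \/ In n E.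
Proof.
  intros Hm Hl Hs Hn [x [y [Kx [Ky Hxy]]]].
  assert (HM : 0 < INR m) by (apply lt_0_INR; lia).
  assert (HM1 : 1 <= INR m) by (assert (INR 1 <= INR m) by (apply le_INR; lia); simpl in H; lra).
  rewrite INR_IZR_INZ in Hxy.
  destruct m as [|m']; [lia|].
  assert (Hlast := sP_last ds m' Hl). rewrite Hs in Hlast.
  assert (H0 : sP ds 0 = 0%Z) by reflexivity.
  destruct Kx as [[j1 [t1 [Hj1 [Ht1 Hx]]]]|[i1 [Hi1 Hx]]];
  destruct Ky as [[j2 [t2 [Hj2 [Ht2 Hy]]]]|[i2 [Hi2 Hy]]]; subst x y;
  apply diff_eq in Hxy; auto.
  -
    pose proof (pos_INR j1) as P1. pose proof (pos_INR j2) as P2.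
    assert (Q1 : INR (S j1) <= INR (S m')) by (apply le_INR; lia).
    assert (Q2 : INR (S j2) <= INR (S m')) by (apply le_INR; lia). rewrite S_INR in Q1, Q2.
    assert (B1 : 0 <= t1 <= INR (S m')) by lra.
    assert (B2 : 0 <= t2 <= INR (S m')) by lra.
    destruct (core _ _ _ _ HM B1 B2 Hxy) as [[Hk Ht]|[[Hk [Ha Hb]]|[Hk [Ha Hb]]]].
    + subst t2. assert (j1 <= S j2)%nat by (apply INR_le_S; lra).
      assert (j2 <= S j1)%nat by (apply INR_le_S; lra).
      left. destruct (Nat.eq_dec j1 j2) as [->|Hne]; [lia|].
      destruct (Nat.eq_dec j1 (S j2)) as [->|Hne2].
      * exists j2. split; [lia|]. rewrite sP_S in Hk. lia.
      * assert (j2 = S j1) by lia. subst j2. exists j1. split; [lia|]. rewrite sP_S in Hk. lia.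
    + subst. assert (S m' <= S j1)%nat by (apply INR_le_S; lra).
      assert (j2 = 0%nat) by (apply INR_le0; lra). subst j2.
      assert (j1 = m') by lia. subst j1. left. exists m'. split; [lia|]. lia.
    + subst. assert (S m' <= S j2)%nat by (apply INR_le_S; lra).
      assert (j1 = 0%nat) by (apply INR_le0; lra). subst j1.
      assert (j2 = m') by lia. subst j2. left. exists m'. split; [lia|]. lia.
  -
    pose proof (Tp_bounds i2). pose proof (pos_INR j1). set (t2 := Tp i2) in *.
    assert (Q1 : INR (S j1) <= INR (S m')) by (apply le_INR; lia). rewrite S_INR in Q1.
    assert (B1 : 0 <= t1 <= INR (S m')) by lra.
    assert (B2 : 0 <= t2 <= INR (S m')) by lra.
    destruct (core _ _ _ _ HM B1 B2 Hxy) as [[Hk Ht]|[[Hk [Ha Hb]]|[Hk [Ha Hb]]]]; try lra.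
    subst t1. assert (j1 = 0%nat) by (apply (INR_lt1 j1 t2); lra). subst j1. lia.
  -
    pose proof (Tp_bounds i1). pose proof (pos_INR j2). set (t1 := Tp i1) in *.
    assert (Q1 : INR (S j2) <= INR (S m')) by (apply le_INR; lia). rewrite S_INR in Q1.
    assert (B1 : 0 <= t1 <= INR (S m')) by lra.
    assert (B2 : 0 <= t2 <= INR (S m')) by lra.
    destruct (core _ _ _ _ HM B1 B2 Hxy) as [[Hk Ht]|[[Hk [Ha Hb]]|[Hk [Ha Hb]]]]; try lra.
    subst t2. assert (j2 = 0%nat) by (apply (INR_lt1 j2 t1); lra). subst j2.
    right. assert (Hq : Z.of_nat n = Z.of_nat (nth i1 E 0%nat)) by lia. apply Nat2Z.inj in Hq. rewrite Hq.
    apply nth_In; auto.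
  -
    pose proof (Tp_bounds i1). pose proof (Tp_bounds i2). set (t1 := Tp i1) in *. set (t2 := Tp i2) in *.
    assert (B1 : 0 <= t1 <= INR (S m')) by lra.
    assert (B2 : 0 <= t2 <= INR (S m')) by lra.
    destruct (core _ _ _ _ HM B1 B2 Hxy) as [[Hk Ht]|[[Hk [Ha Hb]]|[Hk [Ha Hb]]]]; try lra.
    apply Tp_inj in Ht. subst. lia.
Qed.

Lemma KS_piece m ds E j t : (j < m)%nat -> INR j <= t <= INR j + 1 ->
  KS m ds E (IZR (sP ds j) + t / INR m).
Proof. intros; left; exists j, t; auto. Qed.

Lemma KS_diff_bwd m ds E n : (1 <= m)%nat -> length ds = m -> fold_right Z.add 0%Z ds = (-1)%Z ->
  ((exists j, (j < m)%nat /\ Z.abs (nth j ds 0%Z) = Z.of_nat n) \/ In n E) ->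
  (exists x y, KS m ds E x /\ KS m ds E y /\ x - y = INR n).
Proof.
  intros Hm Hl Hs [[j [Hj Hd]]|HE].
  - assert (HM : 0 < INR m) by (apply lt_0_INR; lia).
    assert (Hxy : exists x y, KS m ds E x /\ KS m ds E y /\ x - y = IZR (nth j ds 0%Z)).
    { destruct (lt_dec (S j) m) as [Hlt|Hge].
      - exists (IZR (sP ds (S j)) + INR (S j) / INR m), (IZR (sP ds j) + INR (S j) / INR m).
        split; [apply KS_piece; auto; lra|]. split; [apply KS_piece; auto; rewrite S_INR; lra|].
        rewrite sP_S, plus_IZR. ring.
      - destruct m as [|m']; [lia|]. assert (j = m') by lia. subst j.
        assert (Hlast := sP_last ds m' Hl). rewrite Hs in Hlast.
        exists (IZR (sP ds 0) + INR 0 / INR (S m')), (IZR (sP ds m') + INR (S m') / INR (S m')).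
        split; [apply KS_piece; [lia|]; lra|]. split; [apply KS_piece; [lia|]; rewrite S_INR; lra|].
        assert (IZR (nth m' ds 0%Z) = -1 - IZR (sP ds m')).
        { rewrite <- minus_IZR. f_equal. lia. }
        rewrite H. replace (sP ds 0) with 0%Z by reflexivity. rewrite INR_0. change (IZR 0) with 0. field. lra. }
    destruct Hxy as [x [y [Kx [Ky Hxy]]]].
    rewrite INR_IZR_INZ. destruct (Z.le_gt_cases 0 (nth j ds 0%Z)).
    + exists x, y. rewrite Z.abs_eq in Hd by lia. rewrite <- Hd. auto.
    + exists y, x. rewrite Z.abs_neq in Hd by lia. repeat split; auto.
      rewrite <- Hd, opp_IZR. lra.
  - destruct (In_nth E n 0%nat HE) as [i [Hi Hn]].
    exists (IZR (Z.of_nat (nth i E 0%nat)) + Tp i / INR m), (IZR (sP ds 0) + Tp i / INR m).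
    pose proof (Tp_bounds i). split; [right; exists i; auto|]. split.
    + apply KS_piece; [lia|]. rewrite INR_0. lra.
    + rewrite Hn, <- INR_IZR_INZ. replace (sP ds 0) with 0%Z by reflexivity. change (IZR 0) with 0. ring.
Qed.

Lemma KS_comp m ds E n' : (1 <= m)%nat -> (m + length E <= n')%nat -> ncomp_le (KS m ds E) n'.
Proof.
  intros Hm Hn.
  assert (HM : 0 < INR m) by (apply lt_0_INR; lia).
  exists (fun i => if (i <? m)%nat then IZR (sP ds i) + INR i / INR m
           else if (i - m <? length E)%nat then IZR (Z.of_nat (nth (i - m) E 0%nat)) + Tp (i - m) / INR m
           else IZR (sP ds 0) + INR 0 / INR m).
  split.
  - intros i Hi. destruct (Nat.ltb_spec i m).
    + apply KS_piece; auto. lra.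
    + destruct (Nat.ltb_spec (i - m) (length E)).
      * right. exists (i - m)%nat. auto.
      * apply KS_piece; [lia|]. lra.
  - intros x [[j [t [Hj [Ht Hx]]]]|[i [Hi Hx]]].
    + exists j. split; [lia|].
      exists (fun z => IZR (sP ds j) + INR j / INR m <= z <= IZR (sP ds j) + (INR j + 1) / INR m).
      split; [apply connected_interval|]. split; [|split].
      * intros z Hz. apply piece_iff in Hz; auto. destruct Hz as [t' [Ht' Hz]]. left; exists j, t'; auto.
      * destruct (Nat.ltb_spec j m); [|lia]. apply piece_iff; auto. exists (INR j). split; auto; lra.
      * apply piece_iff; eauto.
    + exists (m + i)%nat. split; [lia|].
      exists (fun z => x <= z <= x). split; [apply connected_interval|]. split; [|split].
      * intros z Hz. replace z with x by lra. right; exists i; auto.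
      * destruct (Nat.ltb_spec (m + i) m); [lia|]. replace (m + i - m)%nat with i by lia.
        destruct (Nat.ltb_spec i (length E)); [|lia]. lra.
      * lra.
Qed.

Definition zsum (c : nat -> Z) (l : list nat) : Z :=
  fold_right (fun a s => (c a * Z.of_nat a + s)%Z) 0%Z l.
Definition gl (l : list nat) : Z := fold_right (fun a g => Z.gcd (Z.of_nat a) g) 0%Z l.

Lemma zsum_upd c a u v l : ~ In a l ->
  zsum (fun x => if Nat.eqb x a then u else (v * c x)%Z) l = (v * zsum c l)%Z.
Proof.
  induction l as [|b l IH]; intros H; simpl; [lia|].
  destruct (Nat.eqb_spec b a). { subst; exfalso; apply H; left; auto. }
  rewrite IH; [lia|]. intro; apply H; right; auto.
Qed.

Lemma bez l : NoDup l -> exists c, zsum c l = gl l.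
Proof.
  induction l as [|a l IH]; intros Hnd.
  - exists (fun _ => 0%Z). reflexivity.
  - inversion Hnd; subst. destruct (IH H2) as [c Hc].
    destruct (Z.gcd_bezout (Z.of_nat a) (gl l) _ eq_refl) as [u [v Huv]].
    exists (fun x => if Nat.eqb x a then u else (v * c x)%Z).
    simpl. rewrite Nat.eqb_refl, zsum_upd by auto. rewrite Hc. simpl in Huv. lia.
Qed.

Lemma gl_div l a : In a l -> (gl l | Z.of_nat a)%Z.
Proof.
  induction l as [|b l IH]; simpl; [intros []|]. intros [H|H].
  - subst. apply Z.gcd_divide_l.
  - eapply Z.divide_trans; [apply Z.gcd_divide_r|]. auto.
Qed.

Lemma gl_nonneg l : (0 <= gl l)%Z.
Proof. destruct l; simpl; [lia|apply Z.gcd_nonneg]. Qed.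

Definition rep_of (c : nat -> Z) (A : list nat) : list (nat * nat * Z) :=
  map (fun a => (a, Z.to_nat (Z.abs (c a)), Z.sgn (c a))) (filter (fun a => negb (Z.eqb (c a) 0)) A).

Lemma rep_of_sum c A :
  fold_right (fun t s => (snd t * Z.of_nat (snd (fst t)) * Z.of_nat (fst (fst t)) + s)%Z) 0%Z (rep_of c A)
  = zsum c A.
Proof.
  unfold rep_of. induction A as [|a l IH]; simpl; auto.
  destruct (Z.eqb_spec (c a) 0) as [E|E]; simpl.
  - rewrite IH, E. lia.
  - rewrite IH. rewrite Z2Nat.id by lia. destruct (c a); simpl; lia.

Qed.

Lemma exists_rep A : finset_pos A -> rel_prime_set A -> exists r, is_rep A r.
Proof.
  intros [Hnd Hpos] [Hne Hrp].
  destruct (bez A Hnd) as [c Hc].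
  assert (Hg : gl A = 1%Z).
  { assert (Z.to_nat (gl A) = 1%nat).
    { apply Hrp. intros a Ha. destruct (gl_div A a Ha) as [k Hk].
      pose proof (Hpos a Ha). pose proof (gl_nonneg A).
      exists (Z.to_nat k). assert (0 <= k)%Z by nia.
      rewrite <- Z2Nat.inj_mul by auto. rewrite <- Hk. rewrite Nat2Z.id. auto. }
    pose proof (gl_nonneg A). lia. }
  exists (rep_of c A). unfold is_rep. split; [|split].
  - unfold rep_of. rewrite map_map. simpl. rewrite map_id. apply NoDup_filter; auto.
  - intros a w e H. unfold rep_of in H. apply in_map_iff in H. destruct H as [x [Hx Hin]].
    apply filter_In in Hin. destruct Hin as [Hin Hf]. inversion Hx; subst.
    split; auto. destruct (Z.eqb_spec (c a) 0); [discriminate|].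
    split; [lia|]. destruct (c a); simpl; auto; lia.
  - rewrite rep_of_sum, Hc, Hg. auto.
Qed.

Definition steps (r : list (nat * nat * Z)) : list Z :=
  flat_map (fun t => repeat (- (snd t * Z.of_nat (fst (fst t))))%Z (snd (fst t))) r.

Lemma steps_length r : length (steps r) = fold_right (fun t s => (snd (fst t) + s)%nat) 0%nat r.
Proof.
  induction r as [|t r IH]; simpl; auto. rewrite length_app, repeat_length, IH. auto.
Qed.

Lemma sum_app (l1 l2 : list Z) : fold_right Z.add 0%Z (l1 ++ l2) = (fold_right Z.add 0%Z l1 + fold_right Z.add 0%Z l2)%Z.
Proof. induction l1; simpl; lia. Qed.

Lemma sum_repeat (v : Z) w : fold_right Z.add 0%Z (repeat v w) = (Z.of_nat w * v)%Z.
Proof. induction w; [simpl; lia|]. rewrite Nat2Z.inj_succ. cbn [repeat fold_right]. lia. Qed.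

Lemma steps_sum r : fold_right Z.add 0%Z (steps r) =
  (- fold_right (fun t s => (snd t * Z.of_nat (snd (fst t)) * Z.of_nat (fst (fst t)) + s)%Z) 0%Z r)%Z.
Proof.
  induction r as [|t r IH]; simpl; auto. unfold steps in *. simpl. rewrite sum_app, sum_repeat, IH. lia.
Qed.

Lemma steps_in A r d : is_rep A r -> In d (steps r) ->
  exists a w e, In (a, w, e) r /\ Z.abs d = Z.of_nat a.
Proof.
  intros [_ [Hr _]] H. unfold steps in H. apply in_flat_map in H.
  destruct H as [[[a w] e] [Hin Hd]]. apply repeat_spec in Hd. simpl in Hd.
  exists a, w, e. split; auto. destruct (Hr a w e Hin) as [_ [_ [-> | ->]]]; subst; lia.
Qed.

Lemma steps_in2 A r a w e : is_rep A r -> In (a, w, e) r ->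
  exists d, In d (steps r) /\ Z.abs d = Z.of_nat a.
Proof.
  intros [_ [Hr _]] Hin. destruct (Hr a w e Hin) as [_ [Hw He]].
  exists (- (e * Z.of_nat a))%Z. split.
  - unfold steps. apply in_flat_map. exists (a, w, e). split; auto. simpl.
    destruct w; [lia|]. left; auto.
  - destruct He; subst; lia.
Qed.

Lemma filter_len {T} (f : T -> bool) l :
  (length (filter f l) + length (filter (fun x => negb (f x)) l))%nat = length l.
Proof. induction l; simpl; auto. destruct (f a); simpl; lia. Qed.

Lemma least_ex (P : nat -> Prop) : (exists n, P n) -> exists n, P n /\ forall k, P k -> (n <= k)%nat.
Proof.
  intros H. destruct (dec_inh_nat_subset_has_unique_least_element P (fun n => classic (P n)) H)
    as [n [[Hn Hl] _]]. eauto.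
Qed.

Theorem mainTheorem5 (A : list nat) :
  finset_pos A -> rel_prime_set A ->
  exists K : R -> Prop,
    N_set K /\ diff_pos_set K A /\
    (forall r, is_rep A r -> ncomp_le K (rep_weight A r)).
Proof.
  intros HA HR.
  destruct (least_ex (fun w => exists r, is_rep A r /\ rep_weight A r = w)) as [w0 [[r0 [Hr0 Hw0]] Hmin]].
  { destruct (exists_rep A HA HR) as [r Hr]; eauto. }
  set (ds := steps r0). set (m := length ds).
  set (used := map (fun t : nat * nat * Z => fst (fst t)) r0).
  set (f := fun a => if in_dec Nat.eq_dec a used then true else false).
  set (E := filter (fun a => negb (f a)) A).
  assert (Hsum : fold_right Z.add 0%Z ds = (-1)%Z).
  { unfold ds. rewrite steps_sum. destruct Hr0 as [_ [_ Hs]]. rewrite Hs. auto. }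
  assert (Hm : (1 <= m)%nat).
  { unfold m. destruct ds; simpl in *; lia. }
  assert (HusedA : forall a, In a used -> In a A).
  { intros a Ha. unfold used in Ha. apply in_map_iff in Ha. destruct Ha as [[[a' w] e] [Ha Hin]].
    simpl in Ha. subst. destruct Hr0 as [_ [Hr _]]. apply (Hr a w e Hin). }
  exists (KS m ds E). split; [apply KS_Nset; auto|split].
  - intros n Hn. split.
    + intros HnA. apply KS_diff_bwd; auto.
      destruct (in_dec Nat.eq_dec n used) as [Hu|Hu].
      * left. unfold used in Hu. apply in_map_iff in Hu. destruct Hu as [[[a w] e] [Ha Hin]].
        simpl in Ha. subst a.
        destruct (steps_in2 A r0 n w e Hr0 Hin) as [d [Hd Hd2]].
        destruct (In_nth ds d 0%Z Hd) as [j [Hj Hjd]]. exists j. split; auto. rewrite Hjd; auto.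
      * right. unfold E. apply filter_In. split; auto. unfold f. destruct (in_dec Nat.eq_dec n used); [contradiction|auto].
    + intros H. apply KS_diff_fwd in H; auto. destruct H as [[j [Hj Hd]]|HE].
      * pose proof (nth_In ds 0%Z Hj) as Hin.
        destruct (steps_in A r0 _ Hr0 Hin) as [a [w [e [Ha Hda]]]].
        assert (a = n) by lia. subst a. destruct Hr0 as [_ [Hr _]]. apply (Hr n w e Ha).
      * unfold E in HE. apply filter_In in HE. tauto.
  - intros r Hr. apply KS_comp; auto.
    pose proof (Hmin (rep_weight A r) (ex_intro _ r (conj Hr eq_refl))) as Hle.
    assert (Hlen : (length used <= length (filter f A))%nat).
    { apply NoDup_incl_length. destruct Hr0 as [Hnd _]. exact Hnd.
      intros x Hx. apply filter_In. split; auto. unfold f. destruct (in_dec Nat.eq_dec x used); [auto|contradiction]. }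
    pose proof (filter_len f A) as Hfl.
    assert (length used = length r0) by (unfold used; apply length_map).
    assert (m = fold_right (fun t s => (snd (fst t) + s)%nat) 0%nat r0) by (unfold m, ds; apply steps_length).
    unfold rep_weight in *. fold E in Hfl. lia.
Qed.
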